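(* Let $M_\varphi$ be a hyperbolic once-punctured torus bundle with fibre $S$. Then the image of the restriction map $r\colon X(M_\varphi)\to X(S)$ equals $X_\varphi(S)$. Moreover, $X_\varphi(S)$ contains at most finitely many characters of reducible representations.
   Context: $\pi_1(M_\varphi)=\langle t,a,b\mid t^{-1}at=\varphi(a), t^{-1}bt=\varphi(b)\rangle$ with $a,b$ free generators of $\pi_1(S)$, $t$ a meridian, and $\varphi_*\in\mathrm{SL}(2,\mathbb{Z})$ the induced map on $H_1(S)$, satisfying $|\operatorname{tr}\varphi_*|>2$. $X(N)$ denotes the $\mathrm{SL}(2,\mathbb{C})$-character variety. $X(S)\cong\mathbb{C}^3$ via $(\operatorname{tr}\rho(a),\operatorname{tr}\rho(b),\operatorname{tr}\rho(ab))$; $X_\varphi(S)$ is the fixed set of the polynomial automorphism of $X(S)$ induced by $\varphi$ ($\chi\mapsto\chi\circ\varphi$). $r$ is restriction to $\pi_1(S)$. *)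

(* Defs.v *)
From HB Require Import structures.
From mathcomp Require Import all_boot all_order all_algebra.
From mathcomp Require Import Rstruct complex.
From Stdlib Require List.
Set Implicit Arguments. Unset Strict Implicit. Unset Printing Implicit Defensive.
Import Order.TTheory GRing.Theory Num.Theory.
Local Open Scope ring_scope.

Definition CC : Type := complex Rdefinitions.R.
Definition CCc : numClosedFieldType := CC.

(** Words in the free group F2 = <a, b> = pi_1(S).  A letter is
    (g, e): g = false for a, g = true for b; e = true means inverse. *)
Definition letter := (bool * bool)%type.
Definition word := seq letter.

Definition inv_letter (l : letter) : letter := (l.1, ~~ l.2).
Definition inv_word (w : word) : word := rev (map inv_letter w).

Definition reduce (w : word) : word :=
  foldr (fun l r => match r with
                    | l' :: r' => if l' == inv_letter l then r' else l :: r
                    | [::] => [:: l]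
                    end) [::] w.

(** An endomorphism of F2 given by the images (pa, pb) of a and b. *)
Definition endo := (word * word)%type.

Definition subst_letter (phi : endo) (l : letter) : word :=
  let u := if l.1 then phi.2 else phi.1 in if l.2 then inv_word u else u.
Definition subst (phi : endo) (w : word) : word := flatten (map (subst_letter phi) w).

Definition gen_a : word := [:: (false, false)].
Definition gen_b : word := [:: (true, false)].

Definition is_F2_aut (phi : endo) : Prop :=
  exists psi : endo,
    reduce (subst phi (subst psi gen_a)) = gen_a /\
    reduce (subst phi (subst psi gen_b)) = gen_b /\
    reduce (subst psi (subst phi gen_a)) = gen_a /\
    reduce (subst psi (subst phi gen_b)) = gen_b.

Definition expsum (g : bool) (w : word) : int :=
  \sum_(l <- w | l.1 == g) (if l.2 then (-1) else 1).

(** phi_* in GL(2,Z): columns are the images of [a], [b] in H_1(S) = Z^2. *)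
Definition phi_star (phi : endo) : 'M[int]_2 :=
  \matrix_(i < 2, j < 2)
    expsum (i != ord0) (if j == ord0 then phi.1 else phi.2).

Definition SL2 (A : 'M[CCc]_2) : Prop := \det A = 1.

Definition eval_letter (A B : 'M[CCc]_2) (l : letter) : 'M[CCc]_2 :=
  let X := if l.1 then B else A in if l.2 then invmx X else X.
Definition eval_word (A B : 'M[CCc]_2) (w : word) : 'M[CCc]_2 :=
  foldr (fun l M => eval_letter A B l *m M) 1%:M w.

Definition char_of (A B : 'M[CCc]_2) : word -> CCc :=
  fun w => \tr (eval_word A B w).

Definition XS (chi : word -> CCc) : Prop :=
  exists A B, SL2 A /\ SL2 B /\ chi = char_of A B.

Definition XS_fixed (phi : endo) (chi : word -> CCc) : Prop :=
  XS chi /\ forall w, chi (subst phi w) = chi w.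

(** Representations of pi_1(M_phi) = <t,a,b | t^-1 a t = phi(a), t^-1 b t = phi(b)>
    into SL(2,C) are triples (T, A, B) satisfying the relations. *)
Definition rep_M (phi : endo) (T A B : 'M[CCc]_2) : Prop :=
  SL2 T /\ SL2 A /\ SL2 B /\
  invmx T *m A *m T = eval_word A B phi.1 /\
  invmx T *m B *m T = eval_word A B phi.2.

Definition restr_image (phi : endo) (chi : word -> CCc) : Prop :=
  exists T A B, rep_M phi T A B /\ chi = char_of A B.

(** A representation of F2 into SL(2,C) is reducible iff C^2 has an
    invariant line, i.e. A and B have a common eigenvector. *)
Definition reducible_rep (A B : 'M[CCc]_2) : Prop :=
  exists (v : 'cV[CCc]_2) (x y : CCc),
    v != 0 /\ A *m v = x *: v /\ B *m v = y *: v.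

Definition reducible_char (chi : word -> CCc) : Prop :=
  exists A B, SL2 A /\ SL2 B /\ reducible_rep A B /\ chi = char_of A B.

(* Main.v *)
Require Import Defs.
From HB Require Import structures.
From mathcomp Require Import all_boot all_order all_algebra.
From mathcomp Require Import Rstruct complex.
From mathcomp Require Import ring.
From Stdlib Require List.
From Stdlib Require Import FunctionalExtensionality Classical.
Import Order.TTheory GRing.Theory Num.Theory.
Local Open Scope ring_scope.
Set Implicit Arguments. Unset Strict Implicit.

Lemma ord2 (k : 'I_2) : k = 0 \/ k = 1.
Proof. case: k => [[|[|//]]] H; [left|right]; exact/val_inj. Qed.

Lemma ord1 (k : 'I_1) : k = 0.
Proof. exact: ord1. Qed.

Lemma mx2P m (M N : 'M[CCc]_(2,m)) :
  (forall j, M 0 j = N 0 j) -> (forall j, M 1 j = N 1 j) -> M = N.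
Proof. move=> H0 H1; apply/matrixP => i j; by case: (ord2 i) => ->. Qed.

Lemma mulmx2E m (M : 'M[CCc]_2) (N : 'M[CCc]_(2,m)) i j :
  (M *m N) i j = M i 0 * N 0 j + M i 1 * N 1 j.
Proof.
rewrite mxE !big_ord_recl big_ord0 addr0.
by have -> : lift ord0 ord0 = 1 :> 'I_2 by apply/val_inj.
Qed.

Lemma det2 (M : 'M[CCc]_2) : \det M = M 0 0 * M 1 1 - M 0 1 * M 1 0.
Proof.
rewrite (expand_det_row _ 0) !big_ord_recl big_ord0 addr0.
rewrite /cofactor !det_mx11 !mxE /=.
have -> : lift ord0 ord0 = 1 :> 'I_2 by apply/val_inj.
have -> : lift (1:'I_2) ord0 = 0 :> 'I_2 by apply/val_inj.
rewrite /bump /= expr0 expr1. ring.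
Qed.

Lemma tr2 (M : 'M[CCc]_2) : \tr M = M 0 0 + M 1 1.
Proof.
rewrite /mxtrace !big_ord_recl big_ord0 addr0.
by have -> : lift ord0 ord0 = 1 :> 'I_2 by apply/val_inj.
Qed.

Lemma SL2_unit A : SL2 A -> A \in unitmx.
Proof. by move=> H; rewrite unitmxE H unitr1. Qed.

Lemma inv_uniq (A B : 'M[CCc]_2) : A \in unitmx -> B *m A = 1%:M -> invmx A = B.
Proof.
move=> uA H. by rewrite -[invmx A]mul1mx -H -mulmxA mulmxV // mulmx1.
Qed.

Lemma invmxM (A B : 'M[CCc]_2) : A \in unitmx -> B \in unitmx ->
  invmx (A *m B) = invmx B *m invmx A.
Proof.
move=> uA uB; apply: inv_uniq; first by rewrite unitmx_mul uA uB.
by rewrite mulmxA -(mulmxA _ _ A) mulVmx // mulmx1 mulVmx.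
Qed.

Lemma SL2_inv A : SL2 A -> SL2 (invmx A).
Proof. by rewrite /SL2 det_inv => ->; rewrite invr1. Qed.

Lemma SL2_mul A B : SL2 A -> SL2 B -> SL2 (A *m B).
Proof. by rewrite /SL2 det_mulmx => -> ->; rewrite mulr1. Qed.

Lemma SL2_1 : SL2 1%:M.
Proof. exact: det1. Qed.

Lemma CH_inv M : SL2 M -> invmx M = \tr M *: 1%:M - M.
Proof.
move=> H; apply: inv_uniq; first exact: SL2_unit.
move: H; rewrite /SL2 det2 => H.
apply/mx2P => j; case: (ord2 j) => ->;
rewrite mulmx2E !mxE tr2 /= -?[X in _ = X]H; ring.
Qed.

Lemma eval_cat A B u w : eval_word A B (u ++ w) = eval_word A B u *m eval_word A B w.
Proof.
elim: u => [|l u IH] /=; first by rewrite mul1mx.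
by rewrite IH mulmxA.
Qed.

Lemma eval_letter_inv A B l : eval_letter A B (inv_letter l) = invmx (eval_letter A B l).
Proof. by case: l => [g []]; rewrite /eval_letter /= ?invmxK. Qed.

Lemma SL2_letter A B l : SL2 A -> SL2 B -> SL2 (eval_letter A B l).
Proof.
move=> HA HB; case: l => [[] []]; rewrite /eval_letter /=; by try apply: SL2_inv.
Qed.

Lemma SL2_eval A B w : SL2 A -> SL2 B -> SL2 (eval_word A B w).
Proof.
move=> HA HB; elim: w => [|l w IH] /=; first exact: SL2_1.
by apply: SL2_mul => //; apply: SL2_letter.
Qed.

Lemma eval_inv_word A B u : SL2 A -> SL2 B ->
  eval_word A B (inv_word u) = invmx (eval_word A B u).
Proof.
move=> HA HB; elim: u => [|l u IH]; first by rewrite /= invmx1.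
rewrite /inv_word /= rev_cons -cats1 eval_cat -/(inv_word u) IH /= mulmx1.
rewrite eval_letter_inv invmxM //; apply: SL2_unit.
  exact: SL2_letter. exact: SL2_eval.
Qed.

Lemma eval_subst A B phi w : SL2 A -> SL2 B ->
  eval_word A B (subst phi w) =
  eval_word (eval_word A B phi.1) (eval_word A B phi.2) w.
Proof.
move=> HA HB; elim: w => [|l w IH] //=.
rewrite /subst /= eval_cat -/(subst phi w) IH; congr (_ *m _).
case: l => [g e]; rewrite /subst_letter /eval_letter /=.
by case: g; case: e => //; rewrite eval_inv_word.
Qed.

Lemma eval_cons A B l w : eval_word A B (l :: w) = eval_letter A B l *m eval_word A B w.
Proof. by []. Qed.

Lemma eval_reduce A B w : SL2 A -> SL2 B -> eval_word A B (reduce w) = eval_word A B w.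
Proof.
move=> HA HB; elim: w => [|l w IH] //.
have -> : reduce (l :: w) = match reduce w with
                    | l' :: r' => if l' == inv_letter l then r' else l :: reduce w
                    | [::] => [:: l]
                    end by [].
move: IH; case: (reduce w) => [|l' r'] IH; first by rewrite !eval_cons -IH.
case: ifP => [/eqP El|_]; first last.
  by rewrite [in RHS]eval_cons -IH eval_cons.
rewrite [in RHS]eval_cons -IH eval_cons El eval_letter_inv mulmxA mulmxV ?mul1mx //.
apply: SL2_unit; exact: SL2_letter.
Qed.

Lemma eval_conj T A B w : T \in unitmx -> SL2 A -> SL2 B ->
  eval_word (invmx T *m A *m T) (invmx T *m B *m T) w = invmx T *m eval_word A B w *m T.
Proof.
move=> uT HA HB; elim: w => [|l w IH] /=; first by rewrite mulmx1 mulVmx.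
rewrite IH.
have -> : eval_letter (invmx T *m A *m T) (invmx T *m B *m T) l
        = invmx T *m eval_letter A B l *m T.
  case: l => [g e]; rewrite /eval_letter /=.
  case: g; case: e => //; rewrite !invmxM ?invmxK ?mulmxA //;
    rewrite ?unitmx_mul ?unitmx_inv ?uT ?SL2_unit //.
rewrite !mulmxA; congr (_ *m _); rewrite -!mulmxA; congr (_ *m _).
by rewrite (mulmxA T) mulmxV // mul1mx.
Qed.

Lemma tr_conj (T M : 'M[CCc]_2) : T \in unitmx -> \tr (invmx T *m M *m T) = \tr M.
Proof. by move=> uT; rewrite mxtrace_mulC mulmxA mulmxV // mul1mx. Qed.

Definition evl (x y : CCc) (l : letter) : CCc :=
  let z := if l.1 then y else x in if l.2 then z^-1 else z.
Definition ev (x y : CCc) (w : word) : CCc := foldr (fun l r => evl x y l * r) 1 w.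

Lemma evl_neq0 x y l : x != 0 -> y != 0 -> evl x y l != 0.
Proof. by move=> ? ?; case: l => [[] []]; rewrite /evl /= ?invr_eq0. Qed.

Lemma ev_neq0 x y w : x != 0 -> y != 0 -> ev x y w != 0.
Proof.
move=> ? ?; elim: w => [|l w IH] /=; first exact: oner_neq0.
by rewrite mulf_neq0 // evl_neq0.
Qed.

Lemma eig_neq0 (M : 'M[CCc]_2) (v : 'cV[CCc]_2) x : M \in unitmx -> v != 0 -> M *m v = x *: v -> x != 0.
Proof.
move=> uM nv H; apply/eqP => x0; move/eqP: nv; apply.
by rewrite -(mulKmx uM v) H x0 scale0r mulmx0.
Qed.

Lemma invmx_eig (M : 'M[CCc]_2) (v : 'cV[CCc]_2) x : M \in unitmx -> M *m v = x *: v -> x != 0 ->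
  invmx M *m v = x^-1 *: v.
Proof.
move=> uM H nx.
have E : v = x *: (invmx M *m v) by rewrite scalemxAr -H mulKmx.
by rewrite {2}E scalerA mulVf // scale1r.
Qed.

Lemma eval_eig A B (v : 'cV[CCc]_2) x y w : A \in unitmx -> B \in unitmx ->
  x != 0 -> y != 0 -> A *m v = x *: v -> B *m v = y *: v ->
  eval_word A B w *m v = ev x y w *: v.
Proof.
move=> uA uB nx ny HA HB; elim: w => [|l w IH] /=; first by rewrite mul1mx scale1r.
rewrite -mulmxA IH -scalemxAr.
have -> : eval_letter A B l *m v = evl x y l *: v.
  case: l => [[] []]; rewrite /eval_letter /evl /=;
  first [ exact: (invmx_eig uB HB ny) | exact: (invmx_eig uA HA nx) | exact: HA | exact: HB ].
by rewrite scalerA mulrC.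
Qed.

Lemma tr_eig (M : 'M[CCc]_2) (v : 'cV[CCc]_2) mu : SL2 M -> v != 0 -> M *m v = mu *: v ->
  \tr M = mu + mu^-1.
Proof.
move=> HM nv H.
have uM := SL2_unit HM.
have nmu := eig_neq0 uM nv H.
have := invmx_eig uM H nmu.
rewrite CH_inv // mulmxBl -scalemxAl mul1mx H => E.
have : (\tr M - mu - mu^-1) *: v = 0.
  by rewrite !scalerBl E subrr.
move/eqP; rewrite scaler_eq0 (negbTE nv) orbF subr_eq0 subr_eq => /eqP ->.
by rewrite addrC.
Qed.

Lemma char_eig A B (v : 'cV[CCc]_2) x y : SL2 A -> SL2 B -> v != 0 ->
  A *m v = x *: v -> B *m v = y *: v ->
  forall w, char_of A B w = ev x y w + (ev x y w)^-1.
Proof.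
move=> HA HB nv Ha Hb w.
have uA := SL2_unit HA; have uB := SL2_unit HB.
have nx := eig_neq0 uA nv Ha; have ny := eig_neq0 uB nv Hb.
apply: (tr_eig (v := v)) => //; first exact: SL2_eval.
exact: eval_eig.
Qed.

Definition D (a : CCc) : 'M[CCc]_2 :=
  \matrix_(i, j) if i == j then (if i == 0 then a else a^-1) else 0.
Definition e1 : 'cV[CCc]_2 := \col_i (if i == 0 then 1 else 0).

Lemma e1_neq0 : e1 != 0.
Proof. apply/eqP => /matrixP /(_ 0 0); rewrite !mxE /=; exact/eqP/oner_neq0. Qed.

Lemma De1 a : D a *m e1 = a *: e1.
Proof.
apply/mx2P => j; rewrite (ord1 j) mulmx2E !mxE /=; ring.
Qed.

Lemma SL2_D a : a != 0 -> SL2 (D a).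
Proof. move=> na; rewrite /SL2 det2 !mxE /= mulfV //; ring. Qed.

Lemma DM a b : D a *m D b = D (a * b).
Proof.
apply/mx2P => j; case: (ord2 j) => ->; rewrite mulmx2E !mxE /= ?invfM; ring.
Qed.

Lemma D1 : D 1 = 1%:M.
Proof. apply/mx2P => j; case: (ord2 j) => ->; rewrite !mxE /= ?invr1 //. Qed.

Lemma invD a : a != 0 -> invmx (D a) = D a^-1.
Proof.
move=> na; apply: inv_uniq; first exact/SL2_unit/SL2_D.
by rewrite DM mulVf // D1.
Qed.

Lemma eval_D x y w : x != 0 -> y != 0 -> eval_word (D x) (D y) w = D (ev x y w).
Proof.
move=> nx ny; elim: w => [|l w IH] /=; first by rewrite D1.
rewrite IH; case: l => [[] []]; rewrite /eval_letter /evl /= ?invD // DM //.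
Qed.

Lemma char_D x y w : x != 0 -> y != 0 -> char_of (D x) (D y) w = ev x y w + (ev x y w)^-1.
Proof.
move=> nx ny; apply: (char_eig (v := e1)); by [apply: SL2_D | apply: e1_neq0 | apply: De1].
Qed.

Lemma red_char A B : SL2 A -> SL2 B -> reducible_rep A B ->
  exists x y, x != 0 /\ y != 0 /\ char_of A B = char_of (D x) (D y).
Proof.
move=> HA HB [v [x [y [nv [Ha Hb]]]]].
have nx := eig_neq0 (SL2_unit HA) nv Ha; have ny := eig_neq0 (SL2_unit HB) nv Hb.
exists x, y; do 2!split => //.
apply: functional_extensionality => w.
by rewrite char_D // (char_eig HA HB nv Ha Hb).
Qed.

Ltac side := repeat (match goal with |- is_true (_ && _) => apply/andP; split end); try assumption.

Lemma f_eq (X x : CCc) : X != 0 -> x != 0 -> X + X^-1 = x + x^-1 -> X = x \/ X = x^-1.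
Proof.
move=> nX nx H.
have : (X - x) * (X - x^-1) = X * ((X + X^-1) - (x + x^-1)) by field; side.
rewrite H subrr mulr0 => /eqP; rewrite mulf_eq0 !subr_eq0 => /orP [] /eqP; tauto.
Qed.

Lemma mixed_eq (x y : CCc) : x != 0 -> y != 0 ->
  x * y + (x * y)^-1 = x * y^-1 + (x * y^-1)^-1 -> x = x^-1 \/ y = y^-1.
Proof.
move=> nx ny H.
have : (x - x^-1) * (y - y^-1) = (x * y + (x * y)^-1) - (x * y^-1 + (x * y^-1)^-1) by field; side.
rewrite H subrr => /eqP; rewrite mulf_eq0 !subr_eq0 => /orP [] /eqP; tauto.
Qed.

Lemma diag_fixed phi x y : x != 0 -> y != 0 ->
  (forall w, char_of (D x) (D y) (subst phi w) = char_of (D x) (D y) w) ->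
  (ev x y phi.1 = x /\ ev x y phi.2 = y) \/ (ev x y phi.1 = x^-1 /\ ev x y phi.2 = y^-1).
Proof.
move=> nx ny H.
set X := ev x y phi.1; set Y := ev x y phi.2.
have nX : X != 0 by apply: ev_neq0.
have nY : Y != 0 by apply: ev_neq0.
have HC w : char_of (D X) (D Y) w = char_of (D x) (D y) w.
  rewrite -H /char_of eval_subst; try exact: SL2_D. by rewrite (eval_D phi.1 nx ny) (eval_D phi.2 nx ny).
have Ha := HC gen_a; have Hb := HC gen_b; have Hab := HC (gen_a ++ gen_b).
rewrite !char_D // /= /evl /= !mulr1 in Ha Hb Hab.
have [EX|EX] := f_eq nX nx Ha; have [EY|EY] := f_eq nY ny Hb.
- by left.
- rewrite EX EY in Hab.
  have [Ex|Ey] := mixed_eq nx ny (esym Hab).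
  + by right; rewrite EX EY -Ex.
  + by left; rewrite EX EY -Ey.
- rewrite EX EY in Hab.
  have : x * y + (x * y)^-1 = x * y^-1 + (x * y^-1)^-1.
    rewrite -Hab; field; side.
  move/(mixed_eq nx ny) => [Ex|Ey].
  + by left; rewrite EX EY -Ex.
  + by right; rewrite EX EY -Ey.
- by right.
Qed.

Definition J : 'M[CCc]_2 := \matrix_(i, j) if i == j then 0 else (if i == 0 then 1 else -1).
Definition J' : 'M[CCc]_2 := \matrix_(i, j) if i == j then 0 else (if i == 0 then -1 else 1).

Lemma SL2_J : SL2 J.
Proof. rewrite /SL2 det2 !mxE /=; ring. Qed.

Lemma invJ : invmx J = J'.
Proof.
apply: inv_uniq; first exact/SL2_unit/SL2_J.
apply/mx2P => j; case: (ord2 j) => ->; rewrite mulmx2E !mxE /=; ring.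
Qed.

Lemma J_conj a : a != 0 -> invmx J *m D a *m J = D a^-1.
Proof.
move=> na; rewrite invJ.
apply/mx2P => j; case: (ord2 j) => ->; rewrite !mulmx2E !mxE /= ?invrK; ring.
Qed.

Lemma diag_conj x y X Y : x != 0 -> y != 0 ->
  (X = x /\ Y = y) \/ (X = x^-1 /\ Y = y^-1) ->
  exists T, SL2 T /\ invmx T *m D x *m T = D X /\ invmx T *m D y *m T = D Y.
Proof.
move=> nx ny [[-> ->]|[-> ->]].
- exists 1%:M; split; first exact: SL2_1.
  by rewrite invmx1 mul1mx mulmx1 mul1mx mulmx1.
- exists J; split; first exact: SL2_J.
  by rewrite !J_conj.
Qed.

Definition vec2 (a b : CCc) : 'cV[CCc]_2 := \col_i (if i == 0 then a else b).

Lemma vec2_neq0 a b : (a != 0) || (b != 0) -> vec2 a b != 0.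
Proof.
case/orP => H; apply/eqP => /matrixP E; move/eqP: H; apply.
  by have := E 0 0; rewrite !mxE.
by have := E 1 0; rewrite !mxE.
Qed.

Lemma cV_neq0 (v : 'cV[CCc]_2) : v != 0 -> (v 0 0 != 0) || (v 1 0 != 0).
Proof.
move=> nv; apply/negPn/negP => /norP [/negPn/eqP H0 /negPn/eqP H1]; move/eqP: nv; apply.
by apply/mx2P => j; rewrite (ord1 j) mxE.
Qed.

Ltac byeq H k := apply/eqP; rewrite -subr_eq0; apply/eqP;
  (transitivity (k * 0); [rewrite -H; ring | by rewrite mulr0]).

Lemma eigvec (M : 'M[CCc]_2) lam : SL2 M -> lam^+2 - \tr M * lam + 1 = 0 ->
  exists v : 'cV_2, v != 0 /\ M *m v = lam *: v.
Proof.
rewrite /SL2 det2 tr2 => HM Hl.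
have Hd : (M 0 0 - lam) * (M 1 1 - lam) - M 0 1 * M 1 0 = 0.
  by rewrite -Hl -[in RHS]HM; ring.
case: (boolP ((M 0 1 != 0) || (M 0 0 - lam != 0))) => [H1|].
  exists (vec2 (M 0 1) (- (M 0 0 - lam))); split.
    by apply: vec2_neq0; rewrite oppr_eq0.
  apply/mx2P => j; rewrite (ord1 j) mulmx2E !mxE /=; first ring.
  byeq Hd (-1 : CCc).
case/norP => /negPn/eqP H01 /negPn/eqP H00.
case: (boolP ((M 1 1 - lam != 0) || (M 1 0 != 0))) => [H2|].
  exists (vec2 (M 1 1 - lam) (- M 1 0)); split.
    by apply: vec2_neq0; rewrite oppr_eq0.
  apply/mx2P => j; rewrite (ord1 j) mulmx2E !mxE /=.
    byeq Hd (1 : CCc).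
  ring.
case/norP => /negPn/eqP H11 /negPn/eqP H10.
exists (vec2 1 0); split; first by apply: vec2_neq0; rewrite oner_neq0.
apply/mx2P => j; rewrite (ord1 j) mulmx2E !mxE /=.
  by move/eqP: H00; rewrite subr_eq0 => /eqP ->; ring.
by rewrite H10; ring.
Qed.

Definition Pm (u v : 'cV[CCc]_2) : 'M[CCc]_2 := \matrix_(i, j) if j == 0 then u i 0 else v i 0.

Lemma Pm_mull (M : 'M[CCc]_2) u v : M *m Pm u v = Pm (M *m u) (M *m v).
Proof.
apply/matrixP => i j; rewrite mulmx2E ![Pm _ _ _ _]mxE.
by case: (ord2 j) => -> /=; rewrite mulmx2E.
Qed.

Lemma Pm_mulr u v (N : 'M[CCc]_2) :
  Pm u v *m N = Pm (N 0 0 *: u + N 1 0 *: v) (N 0 1 *: u + N 1 1 *: v).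
Proof.
apply/matrixP => i j; rewrite mulmx2E !mxE.
by case: (ord2 j) => -> /=; ring.
Qed.

Lemma det_Pm u v : \det (Pm u v) = u 0 0 * v 1 0 - v 0 0 * u 1 0.
Proof. by rewrite det2 !mxE /=; ring. Qed.

Lemma CH (M : 'M[CCc]_2) : SL2 M -> M *m M = \tr M *: M - 1%:M.
Proof.
rewrite /SL2 det2 => H.
apply/mx2P => j; case: (ord2 j) => ->;
rewrite mulmx2E !mxE tr2 /= -?[X in _ = _ - X]H; ring.
Qed.

Definition NA (x : CCc) : 'M[CCc]_2 :=
  \matrix_(i, j) if i == 0 then (if j == 0 then x else 1) else (if j == 0 then -1 else 0).
Definition NB (lam y : CCc) : 'M[CCc]_2 :=
  \matrix_(i, j) if i == 0 then (if j == 0 then 0 else - lam^-1) else (if j == 0 then lam else y).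

Lemma normal_form A B lam : SL2 A -> SL2 B -> ~ reducible_rep A B ->
  lam^+2 - \tr (B *m A) * lam + 1 = 0 ->
  exists P, P \in unitmx /\ A *m P = P *m NA (\tr A) /\ B *m P = P *m NB lam (\tr B).
Proof.
move=> HA HB nred Hl.
have HBA := SL2_mul HB HA.
have [v [nv Hv]] := eigvec HBA Hl.
have uA := SL2_unit HA; have uB := SL2_unit HB; have uBA := SL2_unit HBA.
have nl := eig_neq0 uBA nv Hv.
exists (Pm (A *m v) v); split; last split.
- rewrite unitmxE unitfE det_Pm; apply/negP => /eqP Hd.
  apply: nred.
  have [c Hc] : exists c, A *m v = c *: v.
    set u := A *m v in Hd *.
    case/orP: (cV_neq0 nv) => [v0|v1].
      exists (u 0 0 / v 0 0); apply/mx2P => j; rewrite (ord1 j) [(_ *: v) _ _]mxE.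
        by rewrite mulfVK.
      apply: (mulfI v0); rewrite mulrA [v 0 0 * (_ / _)]mulrC mulfVK //.
      byeq Hd (-1 : CCc).
    exists (u 1 0 / v 1 0); apply/mx2P => j; rewrite (ord1 j) [(_ *: v) _ _]mxE.
      apply: (mulfI v1); rewrite mulrA [v 1 0 * (_ / _)]mulrC mulfVK //.
      byeq Hd (1 : CCc).
    by rewrite mulfVK.
  have nc := eig_neq0 uA nv Hc.
  exists v, c, (c^-1 * lam); split => //; split => //.
  have Ei := invmx_eig uA Hc nc.
  by rewrite -[v in LHS](mulKVmx uA) Ei mulmxA -scalemxAr Hv scalerA.
- rewrite Pm_mull Pm_mulr !mxE /= scale1r scale0r addr0 scaleN1r.
  by rewrite mulmxA CH // mulmxBl mul1mx -scalemxAl.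
- rewrite Pm_mull Pm_mulr !mxE /= scale0r add0r mulmxA Hv.
  congr Pm.
  have Ei := invmx_eig uBA Hv nl.
  rewrite invmxM // -mulmxA in Ei.
  have E2 : invmx B *m v = lam^-1 *: (A *m v).
    by rewrite -[LHS](mulKVmx uA) Ei scalemxAr.
  rewrite CH_inv // mulmxBl -scalemxAl mul1mx in E2.
  move/eqP: E2; rewrite subr_eq addrC -subr_eq => /eqP <-.
  by rewrite scaleNr addrC.
Qed.

Lemma conj_normal (A B A2 B2 P P2 N1 N2 : 'M[CCc]_2) :
  P \in unitmx -> P2 \in unitmx ->
  A *m P = P *m N1 -> B *m P = P *m N2 -> A2 *m P2 = P2 *m N1 -> B2 *m P2 = P2 *m N2 ->
  let T0 := P *m invmx P2 in
  T0 \in unitmx /\ invmx T0 *m A *m T0 = A2 /\ invmx T0 *m B *m T0 = B2.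
Proof.
move=> uP uP2 HA HB HA2 HB2 T0.
have uT : T0 \in unitmx by rewrite unitmx_mul uP unitmx_inv.
have iT : invmx T0 = P2 *m invmx P by rewrite invmxM ?unitmx_inv // invmxK.
have key (M M2 N : 'M[CCc]_2) : M *m P = P *m N -> M2 *m P2 = P2 *m N ->
    invmx T0 *m M *m T0 = M2.
  move=> H H2; rewrite iT /T0.
  have -> : P2 *m invmx P *m M *m (P *m invmx P2) = P2 *m (invmx P *m (M *m P)) *m invmx P2.
    by rewrite !mulmxA.
  by rewrite H mulKmx // -H2 mulmxK.
by split => //; split; apply: key; eassumption.
Qed.

Lemma scale_SL2 (T0 A B A2 B2 : 'M[CCc]_2) : T0 \in unitmx ->
  invmx T0 *m A *m T0 = A2 -> invmx T0 *m B *m T0 = B2 ->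
  exists T, SL2 T /\ invmx T *m A *m T = A2 /\ invmx T *m B *m T = B2.
Proof.
move=> uT HA HB.
have nd : \det T0 != 0 by rewrite -unitfE -unitmxE.
set c := (sqrtC (\det T0))^-1.
have nc : c != 0 by rewrite invr_eq0 sqrtC_eq0.
have uc : c \is a GRing.unit by rewrite unitfE.
have ucT : c *: T0 \in unitmx by rewrite unitmxZ.
exists (c *: T0); split.
  rewrite /SL2 detZ /c exprVn sqrtCK mulVf //.
have E (M : 'M[CCc]_2) : invmx (c *: T0) *m M *m (c *: T0) = invmx T0 *m M *m T0.
  by rewrite invmxZ // -!scalemxAl -scalemxAr scalerA mulVf // scale1r.
by rewrite !E.
Qed.

Lemma quad_root (z : CCc) : exists lam : CCc, lam^+2 - z * lam + 1 = 0.
Proof.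
set s := sqrtC (z^+2 - 4).
exists ((z + s) / 2).
have n2 : (2 : CCc) != 0 by rewrite pnatr_eq0.
have -> : ((z + s) / 2) ^+ 2 - z * ((z + s) / 2) + 1 = (s^+2 - (z^+2 - 4)) / 4.
  by field; rewrite ?n2.
by rewrite sqrtCK subrr mul0r.
Qed.

Lemma expsum_cons g l w : expsum g (l :: w) =
  (if l.1 == g then (if l.2 then -1 else 1) else 0) + expsum g w.
Proof. by rewrite /expsum big_cons; case: ifP => //; rewrite add0r. Qed.

Lemma ev_exp (x y : CCc) w : x != 0 -> y != 0 ->
  ev x y w = x ^ (expsum false w) * y ^ (expsum true w).
Proof.
move=> nx ny; elim: w => [|l w IH].
  by rewrite /expsum !big_nil /= mulr1.
rewrite /= IH !expsum_cons.
case: l => [[] []] /=; rewrite /evl /= ?add0r !expfzDr // ?expr1z ?exprN1 ?expr0z; ring.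
Qed.

Lemma key_exp (x y : CCc) (a b c d : int) : x != 0 -> y != 0 ->
  x ^ a * y ^ b = 1 -> x ^ c * y ^ d = 1 -> x ^ (a * d - b * c) = 1.
Proof.
move=> nx ny H1 H2.
have E1 : x ^ (a * d) * y ^ (b * d) = 1 by rewrite -!exprz_exp -expfzMl H1 exp1rz.
have E2 : x ^ (c * b) * y ^ (d * b) = 1 by rewrite -!exprz_exp -expfzMl H2 exp1rz.
have nQ : y ^ (b * d) != 0 by apply: expfz_neq0.
have PR : x ^ (a * d) = x ^ (c * b).
  by apply: (mulIf nQ); rewrite E1 (mulrC b d) E2.
have nR : x ^ (c * b) != 0 by apply: expfz_neq0.
by rewrite expfzDr // -invr_expz PR (mulrC b c) mulfV.
Qed.

Lemma key_exp2 (x y : CCc) (a b c d : int) : x != 0 -> y != 0 ->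
  x ^ a * y ^ b = 1 -> x ^ c * y ^ d = 1 ->
  x ^ (a * d - b * c) = 1 /\ y ^ (a * d - b * c) = 1.
Proof.
move=> nx ny H1 H2; split; first exact: (key_exp nx ny H1 H2).
have H1' : y ^ b * x ^ a = 1 by rewrite mulrC.
have H2' : y ^ d * x ^ c = 1 by rewrite mulrC.
have H := key_exp ny nx H1' H2'.
have := congr1 GRing.inv H; rewrite invr_expz invr1 => <-.
congr (_ ^ _); ring.
Qed.

Lemma int_root (x : CCc) (K : int) : K != 0 -> x ^ K = 1 ->
  exists n : nat, (0 < n)%N /\ x ^+ n = 1.
Proof.
case: K => n nK H.
  exists n; split => //; by case: n nK H.
exists n.+1; split => //.
by move: H; rewrite /exprz => /eqP; rewrite invr_eq1 => /eqP.
Qed.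

Lemma roots_finite (n : nat) : (0 < n)%N ->
  exists rs : seq CCc, forall x, x ^+ n = 1 -> x \in rs.
Proof.
move=> n0.
have [rs Hrs] := closed_field_poly_normal ('X^n - 1 : {poly CCc}).
exists rs => x Hx.
have nl : lead_coef ('X^n - 1 : {poly CCc}) != 0.
  by rewrite lead_coef_eq0 monic_neq0 // monic_Xn_sub_1.
rewrite -root_prod_XsubC -(rootZ _ _ nl) -Hrs.
by rewrite /root !hornerE Hx subrr.
Qed.

Lemma in_list (T : eqType) (x : T) (s : seq T) : x \in s -> List.In x s.
Proof.
elim: s => [|a s IH] //; rewrite in_cons => /orP [/eqP ->|H]; [by left | by right; apply: IH].
Qed.

Lemma det2i (M : 'M[int]_2) : \det M = M 0 0 * M 1 1 - M 0 1 * M 1 0.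
Proof.
rewrite (expand_det_row _ 0) !big_ord_recl big_ord0 addr0.
rewrite /cofactor !det_mx11 !mxE /=.
have -> : lift ord0 ord0 = 1 :> 'I_2 by apply/val_inj.
have -> : lift (1:'I_2) ord0 = 0 :> 'I_2 by apply/val_inj.
rewrite /bump /= expr0 expr1. ring.
Qed.

Lemma tr2i (M : 'M[int]_2) : \tr M = M 0 0 + M 1 1.
Proof.
rewrite /mxtrace !big_ord_recl big_ord0 addr0.
by have -> : lift ord0 ord0 = 1 :> 'I_2 by apply/val_inj.
Qed.

Lemma int_root' (x : CCc) (K : int) : x ^ K = 1 -> x ^+ `|K|%N = 1.
Proof.
case: K => n H //.
by move: H; rewrite /exprz => /eqP; rewrite invr_eq1 => /eqP.
Qed.

Lemma shift_exp (x y : CCc) (p r e : int) : x != 0 -> x ^ p * y ^ r = x ^ e ->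
  x ^ (p - e) * y ^ r = 1.
Proof.
move=> nx H; rewrite expfzDr // mulrAC H -expfzDr //; by rewrite subrr.
Qed.

Lemma shift_exp' (x y : CCc) (q s e : int) : y != 0 -> x ^ q * y ^ s = y ^ e ->
  x ^ q * y ^ (s - e) = 1.
Proof.
move=> ny H; rewrite expfzDr // mulrA H -expfzDr //; by rewrite subrr.
Qed.

Unset Implicit Arguments. Set Strict Implicit.
Theorem lemma3p1 (phi : endo)
  (Haut : is_F2_aut phi)
  (Hdet : \det (phi_star phi) = 1)
  (Hhyp : 2 < `|\tr (phi_star phi)|) :
  (forall chi : word -> CCc, restr_image phi chi <-> XS_fixed phi chi) /\
  (exists l : list (word -> CCc),
     forall chi, XS_fixed phi chi -> reducible_char chi -> List.In chi l).
Proof.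
have Hfr : forall chi, XS_fixed phi chi -> reducible_char chi ->
    exists x y, x != 0 /\ y != 0 /\ chi = char_of (D x) (D y) /\
    ((ev x y phi.1 = x /\ ev x y phi.2 = y) \/ (ev x y phi.1 = x^-1 /\ ev x y phi.2 = y^-1)).
  move=> chi [_ Hf] [A [B [HA [HB [Hred Ec]]]]].
  have [x [y [nx [ny Ec2]]]] := red_char HA HB Hred.
  exists x, y; do 3!split => //; first by rewrite Ec.
  apply: diag_fixed => // w; rewrite -Ec2 -Ec; exact: Hf.
split.
- move=> chi; split.
  + case=> T [A [B [[HT [HA [HB [E1 E2]]]] ->]]].
    split; first by exists A, B.
    move=> w; rewrite /char_of eval_subst // -E1 -E2 eval_conj ?tr_conj //;
      exact: SL2_unit.
  + case=> [[A [B [HA [HB ->]]]] Hf].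
    case: (classic (reducible_rep A B)) => [Hred|Hirr].
    * have [x [y [nx [ny Ec]]]] := red_char HA HB Hred.
      have Hf' : forall w, char_of (D x) (D y) (subst phi w) = char_of (D x) (D y) w.
        by move=> w; rewrite -Ec; exact: Hf.
      have [T [HT [E1 E2]]] := diag_conj nx ny (diag_fixed nx ny Hf').
      exists T, (D x), (D y); split; last exact: Ec.
      split; first exact: HT.
      split; first exact: SL2_D.
      split; first exact: SL2_D.
      by rewrite !eval_D.
    * set A2 := eval_word A B phi.1; set B2 := eval_word A B phi.2.
      have HA2 : SL2 A2 by apply: SL2_eval.
      have HB2 : SL2 B2 by apply: SL2_eval.
      have HC w : char_of A2 B2 w = char_of A B w.
        by rewrite /char_of -eval_subst //; exact: Hf.
      have Hirr2 : ~ reducible_rep A2 B2.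
        move=> [v [x [y [nv [Hx Hy]]]]].
        have nx := eig_neq0 (SL2_unit HA2) nv Hx.
        have ny := eig_neq0 (SL2_unit HB2) nv Hy.
        have [psi [Hpa [Hpb _]]] := Haut.
        have EA : A = eval_word A2 B2 (subst psi gen_a).
          by rewrite -eval_subst // -eval_reduce // Hpa /= mulmx1.
        have EB : B = eval_word A2 B2 (subst psi gen_b).
          by rewrite -eval_subst // -eval_reduce // Hpb /= mulmx1.
        apply: Hirr; exists v, (ev x y (subst psi gen_a)), (ev x y (subst psi gen_b)).
        split => //; rewrite {1}EA {1}EB; split; apply: eval_eig => //; exact: SL2_unit.
      have trA : \tr A2 = \tr A by have := HC gen_a; rewrite /char_of /= !mulmx1.
      have trB : \tr B2 = \tr B by have := HC gen_b; rewrite /char_of /= !mulmx1.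
      have trBA : \tr (B2 *m A2) = \tr (B *m A).
        by have := HC [:: (true, false); (false, false)]; rewrite /char_of /= !mulmx1.
      have [lam Hl] := quad_root (\tr (B *m A)).
      have [P [uP [PA PB]]] := normal_form HA HB Hirr Hl.
      have [P2 [uP2 [PA2 PB2]]] := normal_form HA2 HB2 Hirr2 (etrans (congr1 (fun z => lam^+2 - z * lam + 1) trBA) Hl).
      rewrite trA trB in PA2 PB2.
      have [uT [E1 E2]] := conj_normal uP uP2 PA PB PA2 PB2.
      have [T [HT [F1 F2]]] := scale_SL2 uT E1 E2.
      exists T, A, B; split => //.
- set M := phi_star phi.
  set t := \tr M.
  set K : int := (2 - t) * (2 + t).
  have HK : K != 0.
    rewrite mulf_neq0 //.
      apply/negP; rewrite subr_eq0 => /eqP Et; move: Hhyp; by rewrite -/M -/t -Et.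
    apply/negP; rewrite addr_eq0 => /eqP Et; move: Hhyp; by rewrite -/M -/t -[t]opprK -Et.
  have nK : (0 < `|K|)%N by rewrite absz_gt0.
  have [rs Hrs] := roots_finite nK.
  exists (List.flat_map (fun a => List.map (fun b => char_of (D a) (D b)) rs) rs).
  move=> chi Hf Hr.
  have [x [y [nx [ny [-> Hd]]]]] := Hfr chi Hf Hr.
  have E1 := ev_exp phi.1 nx ny; have E2 := ev_exp phi.2 nx ny.
  have M00 : expsum false phi.1 = M 0 0 by rewrite /M /phi_star mxE.
  have M10 : expsum true phi.1 = M 1 0 by rewrite /M /phi_star mxE.
  have M01 : expsum false phi.2 = M 0 1 by rewrite /M /phi_star mxE.
  have M11 : expsum true phi.2 = M 1 1 by rewrite /M /phi_star mxE.
  rewrite M00 M10 in E1; rewrite M01 M11 in E2.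
  have Hdt : M 0 0 * M 1 1 - M 0 1 * M 1 0 = 1 by rewrite -det2i.
  have Ht : t = M 0 0 + M 1 1 by rewrite /t tr2i.
  have [Kx Ky] : x ^ K = 1 /\ y ^ K = 1.
    case: Hd => [[X Y]|[X Y]].
    + rewrite X in E1; rewrite Y in E2.
      have E1' : x ^ M 0 0 * y ^ M 1 0 = x ^ 1 by rewrite expr1z -E1.
      have E2' : x ^ M 0 1 * y ^ M 1 1 = y ^ 1 by rewrite expr1z -E2.
      have H1 := shift_exp nx E1'; have H2 := shift_exp' ny E2'.
      have [Hx Hy] := key_exp2 nx ny H1 H2.
      have -> : K = ((M 0 0 - 1) * (M 1 1 - 1) - M 1 0 * M 0 1) * (2 + t).
        rewrite /K Ht; apply/eqP; rewrite -subr_eq0; apply/eqP.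
        transitivity ((1 - (M 0 0 * M 1 1 - M 0 1 * M 1 0)) * (2 + (M 0 0 + M 1 1))); first ring.
        by rewrite Hdt subrr mul0r.
      by rewrite -!exprz_exp Hx Hy !exp1rz.
    + rewrite X in E1; rewrite Y in E2.
      have E1' : x ^ M 0 0 * y ^ M 1 0 = x ^ (-1) by rewrite exprN1 -E1.
      have E2' : x ^ M 0 1 * y ^ M 1 1 = y ^ (-1) by rewrite exprN1 -E2.
      have H1 := shift_exp nx E1'; have H2 := shift_exp' ny E2'.
      have [Hx Hy] := key_exp2 nx ny H1 H2.
      have -> : K = ((M 0 0 - -1) * (M 1 1 - -1) - M 1 0 * M 0 1) * (2 - t).
        rewrite /K Ht; apply/eqP; rewrite -subr_eq0; apply/eqP.
        transitivity ((1 - (M 0 0 * M 1 1 - M 0 1 * M 1 0)) * (2 - (M 0 0 + M 1 1))); first ring.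
        by rewrite Hdt subrr mul0r.
      by rewrite -!exprz_exp Hx Hy !exp1rz.
  have xin := in_list (Hrs x (int_root' Kx)).
  have yin := in_list (Hrs y (int_root' Ky)).
  apply/List.in_flat_map; exists x; split => //.
  exact: (List.in_map (fun b => char_of (D x) (D b))).
Qed.
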